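(* Let $\mathcal G$ be a DAG with vertex set $\mathbf V$, $\mathbf Y\subseteq\mathbf V$, $\boldsymbol\alpha$ a set of directed edges live for $\mathbf Y$, and $\eta_{\mathfrak a_{\boldsymbol\alpha}}$ an edge intervention that is node consistent for $\mathbf Y$. Then $p(\mathbf Y(\mathfrak a_{\boldsymbol\alpha}))$ is identified as a functional of $p(\mathbf V)$ under the single world model (SWM) for $\mathcal G$, via the extended g-formula for the response to the induced node intervention: $$p(\mathbf Y(\mathfrak a_{\boldsymbol\alpha})=\mathbf v_{\mathbf Y})=\sum_{\mathbf v_{\mathbf V\setminus\mathbf Y}}\prod_{V\in\mathbf V}p\big(\mathbf v_V\mid(\mathbf a_{\boldsymbol\alpha})_{\mathrm{pa}(V)\cap\mathbf A},\mathbf v_{\mathrm{pa}(V)\setminus\mathbf A}\big),$$ where $\mathbf A$ is the set of sources of edges in $\boldsymbol\alpha$.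
   Context: Let $\mathcal G$ be a DAG with finite vertex set $\mathbf V$; each vertex is a random variable with state space $\mathfrak X_V$; $\mathfrak X_{\mathbf A}=\prod_{A\in\mathbf A}\mathfrak X_A$; $\mathbf v_{\mathbf A}$ is restriction; $\mathrm{pa}(V)$ are parents. A causal structure is a collection of one-step potential outcomes $V(\mathbf b)$, $\mathbf b\in\mathfrak X_{\mathrm{pa}(V)}$, with a joint distribution; node-intervention responses are defined recursively by $V(\mathbf a)=V(\mathbf a_{\mathrm{pa}(V)\cap\mathbf A},\{W(\mathbf a):W\in\mathrm{pa}(V)\setminus\mathbf A\})$, and $\mathbf A=\emptyset$ gives the observed variables with distribution $p(\mathbf V)$. The single world model (SWM) of $\mathcal G$: for every $\mathbf v\in\mathfrak X_{\mathbf V}$, $\{V(\mathbf v_{\mathrm{pa}(V)}):V\in\mathbf V\}$ are mutually independent. Identified under a model = equal for any two causal structures in the model with the same $p(\mathbf V)$. Edge interventions: for an edge set $\boldsymbol\alpha$, $\mathfrak a\in\mathfrak X_{\boldsymbol\alpha}=\prod_{(AB)\in\boldsymbol\alpha}\mathfrak X_A$ assigns each edge a value of its source; $V(\mathfrak a)=V(\mathfrak a_{\{(WV)\in\boldsymbol\alpha\}},\{W(\mathfrak a):W\in\mathrm{pa}(V),(WV)\notin\boldsymbol\alpha\})$ recursively. A directed path $\beta$ with sink in $\mathbf Y$ is relevant for $\mathbf Y$ given $\boldsymbol\alpha$ if no element of $\boldsymbol\alpha$ is a subpath of $\beta$ except possibly its first edge; $\mathrm{rel}_{\mathcal G}(\mathbf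 Y\mid\boldsymbol\alpha)$ is their set; $\boldsymbol\alpha$ is live for $\mathbf Y$ if each edge in it is the first edge of some relevant path. $\boldsymbol\alpha$ (live for $\mathbf Y$) is consistent for $\mathbf Y$ if for every vertex $A$, the set of first edges of relevant paths with source $A$ is disjoint from or contained in $\boldsymbol\alpha$. $\eta_{\mathfrak a}$ is node consistent for $\mathbf Y$ if $\boldsymbol\alpha$ is live and consistent for $\mathbf Y$ and all edges of $\boldsymbol\alpha$ with a common source get the same value; the induced node intervention sets each source $A$ to that common value, giving $\mathbf a_{\boldsymbol\alpha}\in\mathfrak X_{\mathbf A}$. *)

(* Defs.v *)
From HB Require Import structures.
From mathcomp Require Import all_boot all_order all_algebra.
From mathcomp Require Import reals.
Set Implicit Arguments. Unset Strict Implicit. Unset Printing Implicit Defensive.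
Import Order.TTheory GRing.Theory Num.Theory.
Local Open Scope ring_scope.

Section CausalDefs.
Variables (V : finType) (pa : V -> {set V}) (X : V -> finType).

Definition edge : rel V := fun u w => u \in pa w.

Definition acyclic : Prop := forall u w, edge u w -> ~~ connect edge w u.

Definition asg := {dffun forall v : V, X v}.

Definition agree (S : {set V}) (x y : asg) : bool := [forall v in S, x v == y v].

(* Directed path (x, y, p_1, ..., p_k): first edge (x,y); every later edge is
   an edge of G not in alpha; sink last y p in Y. *)
Definition later_step (alpha : {set V * V}) : rel V :=
  fun u w => edge u w && ((u, w) \notin alpha).

Definition relevant_first (alpha : {set V * V}) (Y : {set V}) (x y : V) : Prop :=
  exists p : seq V, [&& edge x y, path (later_step alpha) y p & last y p \in Y].

Definition live (alpha : {set V * V}) (Y : {set V}) : Prop :=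
  forall e, e \in alpha -> relevant_first alpha Y e.1 e.2.

Definition consistent (alpha : {set V * V}) (Y : {set V}) : Prop :=
  live alpha Y /\
  forall A : V,
    (forall B, relevant_first alpha Y A B -> (A, B) \in alpha) \/
    (forall B, relevant_first alpha Y A B -> (A, B) \notin alpha).

Definition node_consistent (alpha : {set V * V}) (Y : {set V})
    (a : forall e : V * V, X e.1) : Prop :=
  [/\ live alpha Y, consistent alpha Y &
      forall A B C, (A, B) \in alpha -> (A, C) \in alpha -> a (A, B) = a (A, C)].

Definition sources (alpha : {set V * V}) : {set V} := [set e.1 | e in alpha].

Variable R : realType.

Definition is_pmf (O : finType) (P : {ffun O -> R}) : Prop :=
  (forall w, 0 <= P w) /\ \sum_w P w = 1.

Definition prob (O : finType) (P : {ffun O -> R}) (E : pred O) : R :=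
  \sum_(w | E w) P w.

(* A causal structure on a (finite) probability space O: for each outcome w,
   F w v b is the one-step potential outcome v(b_pa(v)); it only depends on
   the parent values b_pa(v). *)
Definition causal_structure (O : finType) (P : {ffun O -> R})
    (F : O -> forall v : V, asg -> X v) : Prop :=
  is_pmf P /\ forall w v b b', agree (pa v) b b' -> F w v b = F w v b'.

Definition SWM (O : finType) (P : {ffun O -> R})
    (F : O -> forall v : V, asg -> X v) : Prop :=
  forall (x : asg) (S : {set V}) (c : asg),
    prob P (fun w => [forall v in S, F w v x == c v]) =
    \prod_(v in S) prob P (fun w => F w v x == c v).

(* observed variables: the solution of the recursive equations v = v(pa(v)) *)
Definition obs_resp (f : forall v : V, asg -> X v) (x : asg) : bool :=
  [forall v, x v == f v x].

Definition edge_mix (alpha : {set V * V}) (a : forall e : V * V, X e.1)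
    (v : V) (x : asg) : asg :=
  @finfun V X (fun u => if (u, v) \in alpha then a (u, v) else x u).

Definition edge_resp (alpha : {set V * V}) (a : forall e : V * V, X e.1)
    (f : forall v : V, asg -> X v) (x : asg) : bool :=
  [forall v, x v == f v (edge_mix alpha a v x)].

Definition pV (O : finType) (P : {ffun O -> R})
    (F : O -> forall v : V, asg -> X v) (v : asg) : R :=
  prob P (fun w => [exists x, obs_resp (F w) x && (x == v)]).

Definition pY_edge (O : finType) (P : {ffun O -> R})
    (F : O -> forall v : V, asg -> X v) (alpha : {set V * V})
    (a : forall e : V * V, X e.1) (Y : {set V}) (v : asg) : R :=
  prob P (fun w => [exists x, edge_resp alpha a (F w) x && agree Y x v]).

Definition marg (q : asg -> R) (S : {set V}) (u : asg) : R :=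
  \sum_(x | agree S x u) q x.

Definition cond (q : asg -> R) (V0 : V) (u : asg) : R :=
  marg q (V0 |: pa V0) u / marg q (pa V0) u.

Definition node_mix (A : {set V}) (aN : asg) (V0 : V) (v : asg) : asg :=
  @finfun V X (fun u => if (u \in pa V0) && (u \in A) then aN u else v u).

Definition gformula (q : asg -> R) (A : {set V}) (aN : asg) (Y : {set V})
    (v : asg) : R :=
  \sum_(w : asg | agree Y w v) \prod_(V0 : V) cond q V0 (node_mix A aN V0 w).

End CausalDefs.

(* Main.v *)
Require Import Defs.
From HB Require Import structures.
From mathcomp Require Import all_boot all_order all_algebra.
From mathcomp Require Import reals.
Set Implicit Arguments. Unset Strict Implicit. Unset Printing Implicit Defensive.
Import Order.TTheory GRing.Theory Num.Theory.
Local Open Scope ring_scope.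

Definition rnk (V : finType) (pa : V -> {set V}) (v : V) : nat :=
  #|[set u | connect (edge pa) u v]|.

Lemma anc_lt (V : finType) (pa : V -> {set V}) (HG : acyclic pa) u v :
  u \in pa v -> (rnk pa u < rnk pa v)%N.
Proof.
move=> uv; apply: proper_card; apply/properP; split.
- apply/subsetP=> x; rewrite !inE => xu; apply: connect_trans xu (connect1 _); exact: uv.
- exists v; rewrite !inE ?connect0 //; exact: (HG _ _ uv).
Qed.

Lemma dag_ind (V : finType) (pa : V -> {set V}) (HG : acyclic pa) (P : V -> Prop) :
  (forall v, (forall u, u \in pa v -> P u) -> P v) -> forall v, P v.
Proof.
move=> H v; have [n] := ubnP (rnk pa v); elim: n v => // n IH v Hv.
apply: H => u /(anc_lt HG) lt; apply: IH; apply: leq_trans lt _; by rewrite -ltnS.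
Qed.

Lemma notin_pa (V : finType) (pa : V -> {set V}) (HG : acyclic pa) v : v \notin pa v.
Proof. apply/negP=> vv; move: (HG _ _ vv); by rewrite connect0. Qed.

Definition pdep (V : finType) (pa : V -> {set V}) (X : V -> finType)
  (g : forall v, asg X -> X v) := forall v x y, agree (pa v) x y -> g v x = g v y.

Lemma agreeP (V : finType) (X : V -> finType) (S : {set V}) (x y : asg X) :
  reflect (forall v, v \in S -> x v = y v) (agree S x y).
Proof.
apply: (iffP forall_inP) => H v vS; [exact/eqP/H | exact/eqP/H].
Qed.

Lemma fix_uniq (V : finType) (pa : V -> {set V}) (X : V -> finType) (HG : acyclic pa)
  (g : forall v, asg X -> X v) : pdep pa g ->
  forall x y : asg X, (forall v, x v = g v x) -> (forall v, y v = g v y) -> x = y.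
Proof.
move=> Hg x y Hx Hy; apply/ffunP; apply: (dag_ind HG) => v IH.
rewrite Hx Hy; apply: Hg; apply/agreeP => u /IH; done.
Qed.

Definition iterg (V : finType) (X : V -> finType) (g : forall v, asg X -> X v)
  (x0 : asg X) (k : nat) : asg X :=
  iter k (fun x => @finfun V X (fun v => g v x)) x0.

Lemma fix_exists (V : finType) (pa : V -> {set V}) (X : V -> finType) (HG : acyclic pa)
  (g : forall v, asg X -> X v) (x0 : asg X) : pdep pa g ->
  exists x : asg X, forall v, x v = g v x.
Proof.
move=> Hg.
have rpos v : (0 < rnk pa v)%N by apply/card_gt0P; exists v; rewrite inE connect0.
have Q k : forall v, (rnk pa v <= k)%N -> forall m, (k <= m)%N -> iterg g x0 m v = iterg g x0 k v.
  elim: k => [|k IH] v Hv m Hm; first by move: (rpos v); rewrite lt0n -leqn0 Hv.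
  case: m Hm => // m Hm; rewrite /iterg /= !ffunE; apply: Hg; apply/agreeP => u uv.
  apply: IH => //; rewrite -ltnS; exact: leq_trans (anc_lt HG uv) Hv.
exists (iterg g x0 #|V|) => v.
have := Q #|V| v (max_card _) #|V|.+1 (leqnSn _); rewrite /iterg /= ffunE => <-; done.
Qed.

Lemma prob_disj (R : realType) (O : finType) (P : {ffun O -> R}) (I : finType)
  (C : pred I) (E : I -> pred O) :
  (forall o i j, C i -> C j -> E i o -> E j o -> i = j) ->
  \sum_(i | C i) prob P (E i) = prob P (fun o => [exists i, C i && E i o]).
Proof.
move=> H; rewrite /prob.
under eq_bigr do rewrite big_mkcond /=.
rewrite exchange_big /= [RHS]big_mkcond /=; apply: eq_bigr => o _.
case: existsP => [[i /andP[Ci Ei]]|N].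
- rewrite (bigD1 i) //= Ei big1 ?addr0 // => j /andP[Cj ji]; case: ifP => // Ej.
  by rewrite (H _ _ _ Cj Ci Ej Ei) eqxx in ji.
- rewrite big1 // => j Cj; case: ifP => // Ej; exfalso; apply: N; exists j; by rewrite Cj.
Qed.

Section Main.
Variables (V : finType) (pa : V -> {set V}) (X : V -> finType) (R : realType).
Hypothesis HG : acyclic pa.
Variables (O : finType) (P : {ffun O -> R}) (F : O -> forall v : V, asg X -> X v).
Hypothesis Hcs : causal_structure pa P F.
Hypothesis Hsw : SWM P F.

Lemma Fdep (o : O) : pdep pa (F o).
Proof. move=> v x y; exact: Hcs.2. Qed.

Definition pi (v : V) (x : asg X) (c : X v) := prob P (fun o => F o v x == c).
Arguments pi : clear implicits.

Lemma pi_dep (v : V) (x y : asg X) (c : X v) : agree (pa v) x y -> pi v x c = pi v y c.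
Proof. by move=> h; apply: eq_bigl => o; rewrite (proj2 Hcs o v x y h). Qed.

Lemma qE (x : asg X) : pV P F x = prob P (fun o => [forall v, F o v x == x v]).
Proof.
apply: eq_bigl => o /=; apply/existsP/forallP.
- by case=> y /andP[/forallP H /eqP <-] v; rewrite eq_sym.
- move=> H; exists x; rewrite eqxx andbT; apply/forallP => v; by rewrite eq_sym.
Qed.

Lemma q_ge0 (x : asg X) : 0 <= pV P F x.
Proof. by apply: sumr_ge0 => o _; exact: Hcs.1.1. Qed.

Definition ancestral (S : {set V}) := forall a b, a \in S -> b \in pa a -> b \in S.

Lemma ES_agree S o (z x : asg X) : ancestral S -> (forall v, x v = F o v x) ->
  [forall a in S, F o a z == z a] -> agree S x z.
Proof.
move=> HS Hx /forall_inP Hz; apply/agreeP.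
apply: (dag_ind HG (P := fun a => a \in S -> x a = z a)) => a IH aS.
rewrite Hx -(eqP (Hz a aS)); apply: Hcs.2; apply/agreeP => b bpa.
apply: IH => //; exact: HS aS bpa.
Qed.

Lemma marg_decomp (S T : {set V}) (u : asg X) : ancestral S -> T \subset S ->
  marg (pV P F) T u = \sum_(z | agree T z u && agree (~: S) z u)
                         prob P (fun o => [forall a in S, F o a z == z a]).
Proof.
move=> HS /subsetP TS; rewrite /marg.
under eq_bigr do rewrite qE.
rewrite [LHS]prob_disj; last first.
  move=> o x y _ _ /forallP Hx /forallP Hy; apply: (fix_uniq HG (Fdep o)) => v.
  - by rewrite (eqP (Hx v)).
  - by rewrite (eqP (Hy v)).
rewrite [RHS]prob_disj; last first.
  move=> o z z' /andP[_ /agreeP zS] /andP[_ /agreeP zS'] Hz Hz'.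
  have [x Hx] := fix_exists HG u (Fdep o).
  move/agreeP: (ES_agree HS Hx Hz) => h; move/agreeP: (ES_agree HS Hx Hz') => h'.
  apply/ffunP => b; case: (boolP (b \in S)) => bS.
  - by rewrite -h // -h'.
  - by rewrite zS ?inE // zS' ?inE.
apply: eq_bigl => o /=; apply/existsP/existsP.
- case=> x /andP[/agreeP xT /forallP Hx].
  exists (@finfun V X (fun b => if b \in S then x b else u b)).
  apply/andP; split; first (apply/andP; split).
  + apply/agreeP => b bT; rewrite ffunE TS //; exact: xT.
  + apply/agreeP => b; rewrite inE ffunE => /negbTE -> //.
  + apply/forall_inP => b bS; rewrite [X in _ == X]ffunE bS.
    rewrite -(eqP (Hx b)); apply/eqP; apply: Hcs.2; apply/agreeP => c cp.
    by rewrite ffunE (HS _ _ bS cp).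
- case=> z /andP[/andP[/agreeP zT _] Hz].
  have [x Hx] := fix_exists HG u (Fdep o).
  exists x; apply/andP; split.
  + apply/agreeP => b bT; move/agreeP: (ES_agree HS Hx Hz) => h.
    rewrite h ?TS //; exact: zT.
  + by apply/forallP => b; rewrite -Hx.
Qed.

Hypothesis Hpos : forall v, 0 < pV P F v.

Lemma cond_pi (V0 : V) (u : asg X) : cond pa (pV P F) V0 u = pi V0 u (u V0).
Proof.
set S' := [set b | connect (edge pa) b V0].
set S := S' :\ V0.
have HS' : ancestral S'.
  move=> b c; rewrite !inE => bS cp; apply: connect_trans bS; exact: connect1.
have HS : ancestral S.
  move=> b c; rewrite !inE => /andP[bV bS] cp; apply/andP; split.
  - apply/eqP => cV; move: (HG cp) bS; rewrite cV => /negbTE ->; done.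
  - apply: connect_trans bS; exact: connect1.
have V0S' : V0 \in S' by rewrite inE connect0.
have V0S : V0 \notin S by rewrite !inE eqxx.
have paS : pa V0 \subset S.
  apply/subsetP => b bp; rewrite !inE; apply/andP; split.
  - by apply/eqP => e; move: bp; rewrite e (negbTE (notin_pa HG V0)).
  - exact: connect1.
have TS' : V0 |: pa V0 \subset S'.
  apply/subsetP => b; rewrite !inE => /orP[/eqP ->|bp]; first exact: connect0.
  exact: connect1.
rewrite /cond (marg_decomp u HS' TS') (marg_decomp u HS paS).
have Hfil z : (agree (V0 |: pa V0) z u && agree (~: S') z u) =
              (agree (pa V0) z u && agree (~: S) z u).
  apply/andP/andP => [[/agreeP h1 /agreeP h2]|[/agreeP h1 /agreeP h2]]; split; apply/agreeP.
  - by move=> b bp; apply: h1; rewrite inE bp orbT.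
  - move=> b; rewrite inE => bS; case: (eqVneq b V0) => [->|bV].
    + by apply: h1; rewrite !inE eqxx.
    + by apply: h2; move: bS; rewrite !inE bV.
  - move=> b; rewrite !inE => /orP[/eqP ->|bp]; last exact: h1.
    by apply: h2; rewrite inE.
  - move=> b; rewrite inE => bS; apply: h2; by rewrite inE in_setD1 negb_and bS orbT.
rewrite (eq_bigl _ _ Hfil).
have -> : \sum_(z | agree (pa V0) z u && agree (~: S) z u)
            prob P (fun o => [forall a in S', F o a z == z a]) =
          pi V0 u (u V0) * \sum_(z | agree (pa V0) z u && agree (~: S) z u)
            prob P (fun o => [forall a in S, F o a z == z a]).
  rewrite mulr_sumr; apply: eq_bigr => z /andP[/agreeP zp /agreeP zS].
  rewrite (Hsw z S' z) (Hsw z S z) (bigD1 V0) //=.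
  have -> : z V0 = u V0 by apply: zS; rewrite inE.
  rewrite -/(pi V0 z (u V0)) (@pi_dep V0 z u); last by apply/agreeP.
  congr (_ * _); apply: eq_bigl => b; by rewrite !inE andbC.
have m0 : 0 < \sum_(z | agree (pa V0) z u && agree (~: S) z u)
            prob P (fun o => [forall a in S, F o a z == z a]).
  rewrite -(marg_decomp u HS paS) /marg (bigD1 u) /=; last by apply/agreeP.
  apply: (lt_le_trans (Hpos u)); rewrite lerDl; apply: sumr_ge0 => x _; exact: q_ge0.
by rewrite mulfK // gt_eqF.
Qed.


Variables (Y : {set V}) (alpha : {set V * V}) (a : forall e : V * V, X e.1) (aN : asg X).
Hypothesis Hcons : consistent pa alpha Y.
Hypothesis HaN : forall A B, (A, B) \in alpha -> aN A = a (A, B).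

Definition zmix (w : asg X) : asg X :=
  @finfun V X (fun u => if u \in sources alpha then aN u else w u).

Lemma node_dep (o : O) : pdep pa (fun v x => F o v (zmix x)).
Proof.
move=> v x y /agreeP h; apply: (proj2 Hcs); apply/agreeP => u up.
rewrite !ffunE; case: ifP => // _; exact: h.
Qed.

Lemma edge_dep (o : O) : pdep pa (fun v x => F o v (edge_mix alpha a v x)).
Proof.
move=> v x y /agreeP h; apply: (proj2 Hcs); apply/agreeP => u up.
rewrite !ffunE; case: ifP => // _; exact: h.
Qed.

Definition relv (r : V) := exists p, path (later_step pa alpha) r p && (last r p \in Y).

Lemma rel_agree (o : O) (x w : asg X) :
  (forall v, x v = F o v (edge_mix alpha a v x)) ->
  (forall v, w v = F o v (zmix w)) -> forall r, relv r -> x r = w r.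
Proof.
move=> Hx Hw; apply: (dag_ind HG (P := fun r => relv r -> x r = w r)) => r IH [p /andP[pp lp]].
rewrite Hx Hw; apply: (proj2 Hcs); apply/agreeP => u up; rewrite !ffunE.
case: (boolP ((u, r) \in alpha)) => ur.
- have uA : u \in sources alpha by apply/imsetP; exists (u, r).
  by rewrite uA (HaN ur).
- have rel_u : relv u.
    exists (r :: p); rewrite /= lp pp !andbT /later_step /edge up ur //.
  case: ifP => uA; last exact: IH.
  exfalso; move/imsetP: uA => [[u' b] ub /= eu]; subst u'.
  have Hrf := (proj1 Hcons) _ ub.
  case: ((proj2 Hcons) u) => H.
  + have : (u, r) \in alpha by apply: H; exists p; rewrite /edge up pp lp.
    by rewrite (negbTE ur).
  + by move: (H b Hrf); rewrite ub.
Qed.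

Lemma gform (v : asg X) :
  pY_edge P F alpha a Y v = gformula pa (pV P F) (sources alpha) aN Y v.
Proof.
rewrite /gformula.
have E1 (w : asg X) : \prod_(V0 : V) cond pa (pV P F) V0 (node_mix pa (sources alpha) aN V0 w)
    = prob P (fun o => [forall v0 in [set: V], F o v0 (zmix w) == w v0]).
  rewrite (Hsw (zmix w) setT w).
  apply: eq_big => [v0|v0 _]; first by rewrite inE.
  rewrite cond_pi ffunE (negbTE (notin_pa HG v0)) /=; apply: pi_dep.
  by apply/agreeP => u up; rewrite !ffunE up.
under eq_bigr do rewrite E1.
rewrite prob_disj; last first.
  move=> o w w' _ _ /forall_inP H /forall_inP H'.
  apply: (fix_uniq HG (node_dep o)) => v0.
  - by rewrite (eqP (H v0 (in_setT v0))).
  - by rewrite (eqP (H' v0 (in_setT v0))).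
apply: eq_bigl => o /=; apply/existsP/existsP.
- case=> x /andP[/forallP Hx /agreeP xY].
  have [w Hw] := fix_exists HG v (node_dep o).
  exists w; apply/andP; split.
  + apply/agreeP => y yY; rewrite -(rel_agree (fun v0 => eqP (Hx v0)) Hw); first exact: xY.
    by exists [::]; rewrite /= yY.
  + by apply/forall_inP => v0 _; rewrite -Hw.
- case=> w /andP[/agreeP wY /forall_inP Hw].
  have Hw' : forall v0, w v0 = F o v0 (zmix w) by move=> v0; rewrite (eqP (Hw v0 (in_setT v0))).
  have [x Hx] := fix_exists HG v (edge_dep o).
  exists x; apply/andP; split.
  + by apply/forallP => v0; rewrite -Hx.
  + apply/agreeP => y yY; rewrite (rel_agree Hx Hw'); first exact: wY.
    by exists [::]; rewrite /= yY.
Qed.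

End Main.

From Stdlib Require Import FunctionalExtensionality.

Theorem corollary1 (R : realType) (V : finType) (pa : V -> {set V})
    (X : V -> finType) (Y : {set V}) (alpha : {set V * V})
    (a : forall e : V * V, X e.1) (aN : asg X)
    (HG : acyclic pa)
    (Hlive : live pa alpha Y)
    (Hnc : node_consistent pa alpha Y a)
    (HaN : forall A B, (A, B) \in alpha -> aN A = a (A, B)) :
  (* identification under the SWM (for positive observed distributions) *)
  (forall (O1 O2 : finType) (P1 : {ffun O1 -> R}) (P2 : {ffun O2 -> R})
          (F1 : O1 -> forall v : V, asg X -> X v)
          (F2 : O2 -> forall v : V, asg X -> X v),
     causal_structure pa P1 F1 -> SWM P1 F1 ->
     causal_structure pa P2 F2 -> SWM P2 F2 ->
     (forall v, 0 < pV P1 F1 v) ->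
     (forall v, pV P1 F1 v = pV P2 F2 v) ->
     forall v, pY_edge P1 F1 alpha a Y v = pY_edge P2 F2 alpha a Y v) /\
  (* the extended g-formula *)
  (forall (O : finType) (P : {ffun O -> R})
          (F : O -> forall v : V, asg X -> X v),
     causal_structure pa P F -> SWM P F ->
     (forall v, 0 < pV P F v) ->
     forall v, pY_edge P F alpha a Y v
               = gformula pa (pV P F) (sources alpha) aN Y v).
Proof.
have [_ Hcons _] := Hnc.
split.
- move=> O1 O2 P1 P2 F1 F2 cs1 sw1 cs2 sw2 pos1 eqp v.
  have pos2 : forall v, 0 < pV P2 F2 v by move=> x; rewrite -eqp.
  rewrite (gform HG cs1 sw1 pos1 Hcons HaN) (gform HG cs2 sw2 pos2 Hcons HaN).
  by rewrite (functional_extensionality _ _ eqp).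
- move=> O P F cs sw pos v; exact: (gform HG cs sw pos Hcons HaN).
Qed.
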